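(* Let $T\ge1$, $R\ge 1$, let $\kappa_1,\dots,\kappa_R\ge 0$, let $0<\omega_1\le\cdots\le\omega_R$, and let $d_1,\dots,d_T\ge 0$ be real numbers. For $\theta\ge 0$ define $$\tilde Z_j(\theta)=\sum_{r=1}^R\kappa_r\cos(\omega_r\theta d_j),\qquad \tilde A_j(\theta)=\frac{\exp(\tilde Z_j(\theta))}{\sum_{j'=1}^T\exp(\tilde Z_{j'}(\theta))},\quad j\in[T].$$ Let $S\subseteq[T]$, $F=[T]\setminus S$, assume $d_i\le d_j$ for all $i\in S$, $j\in F$, and let $M_S(\theta)=\sum_{i\in S}\tilde A_i(\theta)$. Let $d_{\max}=\max_j d_j$ and $\omega_{\max}=\max_r\omega_r=\omega_R$. Then for every $\theta$ with $0\le \theta\le \pi/(2\omega_{\max}d_{\max})$ (any $\theta\ge0$ if $d_{\max}=0$), $$\frac{d}{d\theta}M_S(\theta)\ge 0.$$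
   Context: $[T]=\{1,\dots,T\}$. This is a reduced-form (coherent-band) model of rotary positional encoding (RoPE) in one cross-attention row: $d_j=\tilde l-j$ is the relative distance of history position $j$ from the current decoder position, $\theta$ is the overall rotary scale, and $S$ is the set of ''near'' positions. *)

(* Defs.v *)
From HB Require Import structures.
From mathcomp Require Import all_boot all_order all_algebra.
From mathcomp Require Import all_classical all_reals all_analysis.
Set Implicit Arguments. Unset Strict Implicit. Unset Printing Implicit Defensive.
Import Order.TTheory GRing.Theory Num.Theory.
Import numFieldNormedType.Exports.
Local Open Scope ring_scope.

(* Indices [T] are represented by 'I_T (i.e. 0..T-1), [R] by 'I_Rn. *)

Definition Zt (R : realType) (T Rn : nat) (kappa omega : 'I_Rn -> R)
  (d : 'I_T -> R) (j : 'I_T) (theta : R) : R :=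
  \sum_(r < Rn) kappa r * cos (omega r * theta * d j).

Definition At (R : realType) (T Rn : nat) (kappa omega : 'I_Rn -> R)
  (d : 'I_T -> R) (j : 'I_T) (theta : R) : R :=
  expR (Zt kappa omega d j theta) /
  \sum_(j' < T) expR (Zt kappa omega d j' theta).

Definition MS (R : realType) (T Rn : nat) (kappa omega : 'I_Rn -> R)
  (d : 'I_T -> R) (S : {set 'I_T}) (theta : R) : R :=
  \sum_(i in S) At kappa omega d i theta.

Definition dmax (R : realType) (T : nat) (d : 'I_T -> R) : R :=
  \big[Num.max/0]_(j < T) d j.

Definition omegamax (R : realType) (Rn : nat) (omega : 'I_Rn -> R) : R :=
  \big[Num.max/0]_(r < Rn) omega r.

(* Main.v *)
Require Import Defs.
From HB Require Import structures.
From mathcomp Require Import all_boot all_order all_algebra.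
From mathcomp Require Import all_classical all_reals all_analysis.
From mathcomp Require Import lra ring.
Import Order.TTheory GRing.Theory Num.Theory.
Import numFieldNormedType.Exports.
Local Open Scope ring_scope.

Lemma is_derive_bigsum (R : realType) (I : finType) (P : pred I)
  (h : I -> R -> R) (x : R)
  (dh : I -> R) : (forall i, is_derive x 1 (h i) (dh i)) ->
  is_derive x 1 (fun t => \sum_(i | P i) h i t) (\sum_(i | P i) dh i).
Proof.
move=> H.
have -> : (fun t => \sum_(i | P i) h i t) = \sum_(i | P i) h i by rewrite fct_sumE.
elim/big_ind2 : _ => //; first exact: is_derive_cst.
by move=> f1 a1 f2 a2 ? ?; exact: is_deriveD.
Qed.

Lemma is_derive_lin (R : realType) (a b x : R) :
  is_derive x 1 (fun t => a * t * b) (a * b).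
Proof.
have -> : (fun t => a * t * b) = (a * b) *: (@id R).
  by apply/funext => t /=; rewrite fctE /= mulrAC.
have H := is_deriveZ (a*b) (is_derive_id x (1:R)).
by apply: is_derive_eq H _; rewrite [LHS]mulr1.
Qed.

Lemma is_derive_kcos (R : realType) (k a b x : R) :
  is_derive x 1 (fun t => k * cos (a * t * b))
    (k * (- sin (a * x * b) * (a * b))).
Proof.
have -> : (fun t => k * cos (a * t * b)) = k *: (cos \o (fun t => a * t * b)).
  by apply/funext => t; rewrite fctE.
have H1 := @is_derive_lin R a b x.
have H2 := @is_derive1_comp R cos (fun t => a * t * b) x _ _ (is_derive_cos _) H1.
have H := is_deriveZ k H2.
by apply: is_derive_eq H _.
Qed.

Lemma sin_le_aux (R : realType) (u v : R) :
  0 <= u -> u <= v -> v <= pi/2 -> 0 <= sin u /\ sin u <= sin v.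
Proof.
move=> u0 uv vp.
have pi0 := @pi_gt0 R.
split.
  by apply: sin_ge0_pi; apply/andP; split => //; lra.
move: uv; rewrite le_eqVlt => /orP [/eqP -> //|uv].
apply/ltW; rewrite ltr_sin // in_itv /=; apply/andP; split; lra.
Qed.

Lemma dZ_mono (R : realType) (Rn : nat) (kappa omega : 'I_Rn -> R) (x di dj : R) :
  (forall r, 0 <= kappa r) -> (forall r, 0 < omega r) -> 0 <= x ->
  0 <= di -> di <= dj -> (forall r, omega r * x * dj <= pi / 2) ->
  \sum_(r < Rn) kappa r * (- sin (omega r * x * dj) * (omega r * dj)) <=
  \sum_(r < Rn) kappa r * (- sin (omega r * x * di) * (omega r * di)).
Proof.
move=> hk ho hx hdi hdij hb.
apply: ler_sum => r _.
have hox : 0 <= omega r * x by rewrite mulr_ge0 // ltW.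
have u0 : 0 <= omega r * x * di by rewrite mulr_ge0.
have uv : omega r * x * di <= omega r * x * dj by rewrite ler_wpM2l.
have [s0 sle] := @sin_le_aux R _ _ u0 uv (hb r).
rewrite !mulNr !mulrN lerN2; apply: ler_wpM2l => //.
apply: ler_pM => //; first by rewrite mulr_ge0 // ltW.
by rewrite ler_wpM2l // ltW.
Qed.

Lemma key_ineq (R : realType) (T : nat) (S : {set 'I_T}) (e z : 'I_T -> R) :
  (forall j, 0 <= e j) -> (forall i j, i \in S -> j \notin S -> z j <= z i) ->
  0 <= (\sum_j e j) * (\sum_(i in S) e i * z i)
       - (\sum_(i in S) e i) * (\sum_j e j * z j).
Proof.
move=> he hz.
have -> : (\sum_j e j) * (\sum_(i in S) e i * z i)
       - (\sum_(i in S) e i) * (\sum_j e j * z j) =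
   \sum_j \sum_(i in S) e j * e i * (z i - z j).
  transitivity (\sum_j (e j * (\sum_(i in S) e i * z i)
                         - e j * z j * \sum_(i in S) e i)).
    by rewrite sumrB -!mulr_suml [X in _ - X = _]mulrC.
  apply: eq_bigr => j _; rewrite !mulr_sumr -sumrB.
  by apply: eq_bigr => i _; ring.
rewrite (bigID (mem S)) /=.
have HX : \sum_(j in S) \sum_(i in S) e j * e i * (z i - z j) = 0.
  set X := LHS.
  have : X = - X.
    rewrite {1}/X exchange_big /= -sumrN; apply: eq_bigr => i _.
    rewrite -sumrN; apply: eq_bigr => j _; ring.
  lra.
rewrite HX add0r; apply: sumr_ge0 => j hj; apply: sumr_ge0 => i hi.
by rewrite !mulr_ge0 // subr_ge0 hz.
Qed.

Theorem mainTheorem2 (R : realType) (T Rn : nat)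
  (kappa omega : 'I_Rn -> R) (d : 'I_T -> R) (S : {set 'I_T}) (theta : R) :
  (1 <= T)%N -> (1 <= Rn)%N ->
  (forall r, 0 <= kappa r) ->
  (forall r, 0 < omega r) ->
  (forall r s : 'I_Rn, (r <= s)%N -> omega r <= omega s) ->
  (forall j, 0 <= d j) ->
  (forall i j, i \in S -> j \notin S -> d i <= d j) ->
  0 <= theta ->
  (dmax d = 0 \/ theta <= pi / (2 * omegamax omega * dmax d)) ->
  derivable (MS kappa omega d S) theta 1 /\
  0 <= derive1 (MS kappa omega d S) theta.
Proof.
move=> hT _ hk ho _ hd hS ht hth.
pose dZ j (x : R) := \sum_(r < Rn) kappa r * (- sin (omega r * x * d j) * (omega r * d j)).
have HZ : forall j, is_derive theta 1 (Zt kappa omega d j) (dZ j theta).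
  move=> j; rewrite /Zt /dZ; apply: (@is_derive_bigsum R _ xpredT) => r.
  exact: is_derive_kcos.
have HE : forall j, is_derive theta 1 (fun x => expR (Zt kappa omega d j x))
                      (expR (Zt kappa omega d j theta) * dZ j theta).
  move=> j; exact: (is_derive1_comp (is_derive_expR _) (HZ j)).
have HN := @is_derive_bigsum R _ (mem S) _ _ _ HE.
have HD := @is_derive_bigsum R _ xpredT _ _ _ HE.
pose j0 : 'I_T := Ordinal hT.
have Dpos : 0 < \sum_(j | xpredT j) expR (Zt kappa omega d j theta).
  apply: lt_le_trans (expR_gt0 (Zt kappa omega d j0 theta)) _.
  rewrite (bigD1 j0) //= lerDl sumr_ge0 // => *; exact/ltW/expR_gt0.
have HDV := is_deriveV (lt0r_neq0 Dpos) HD.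
have HM := is_deriveM HN HDV.
have Meq : MS kappa omega d S =
  (fun x => \sum_(i | mem S i) expR (Zt kappa omega d i x)) *
  (fun x => (\sum_(j | xpredT j) expR (Zt kappa omega d j x))^-1).
  by apply/funext => x; rewrite /MS /At fctE mulr_suml.
rewrite Meq; case: HM => HMd HMv; split => //.
rewrite derive1E HMv.
have hb : forall j r, omega r * theta * d j <= pi / 2.
  move=> j r; have pi0 := @pi_gt0 R.
  have hdj : d j <= dmax d by exact: le_bigmax.
  have dm0 : 0 <= dmax d := le_trans (hd j) hdj.
  have zcase : dmax d = 0 -> omega r * theta * d j <= pi / 2.
    move=> h0; have -> : d j = 0 by apply/le_anti; rewrite hd -h0 hdj.
    rewrite mulr0; lra.
  case: hth => [h0|hth]; first exact: zcase.
  case: (eqVneq (dmax d) 0) => [h0|hne]; first exact: zcase.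
  have dmp : 0 < dmax d by rewrite lt0r hne.
  have hor : omega r <= omegamax omega by exact: le_bigmax.
  have omp : 0 < omegamax omega := lt_le_trans (ho r) hor.
  have h2 : theta * (2 * omegamax omega * dmax d) <= pi.
    by rewrite -ler_pdivlMr // !mulr_gt0.
  have h3 : omega r * theta * d j <= omegamax omega * theta * dmax d.
    apply: ler_pM => //; first by rewrite mulr_ge0 // ltW.
    by rewrite ler_wpM2r.
  have h4 : omegamax omega * theta * dmax d
            = theta * (2 * omegamax omega * dmax d) / 2 by field.
  lra.
pose e j := expR (Zt kappa omega d j theta).
pose z j := dZ j theta.
have K := @key_ineq R T S e z (fun j => ltW (expR_gt0 _)).
have K' : 0 <= (\sum_j e j) * (\sum_(i in S) e i * z i)
       - (\sum_(i in S) e i) * (\sum_j e j * z j).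
  apply: K => i j hi hj; rewrite /z /dZ.
  by apply: dZ_mono => //; exact: hS.
move: K'; rewrite /e /z.
set D := \sum_j expR (Zt kappa omega d j theta).
set N := \sum_(i in S) expR (Zt kappa omega d i theta).
set D' := \sum_j expR (Zt kappa omega d j theta) * dZ j theta.
set N' := \sum_(i in S) expR (Zt kappa omega d i theta) * dZ i theta.
move=> K'.
have Dne : D != 0 by exact: lt0r_neq0.
have -> : N *: (- D ^- 2 *: D') + D^-1 *: N' = (D * N' - N * D') / D^+2.
  by rewrite /GRing.scale /=; field.
by apply: divr_ge0 => //; exact: sqr_ge0.
Qed.
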